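(* In the single-deceiver single-oblivious quadratic setting of the context, let $\Omega$ be the set of attainable values $J^{\mathrm{ref}}\in\mathbb{R}$, and assume $r_{1,2}\neq0$. Then: (a) if $\varepsilon_1r_{1,2}q_1q_3>0$, then $\Omega=\mathcal{J}_1\Big(\big(-\infty,-\tfrac{r_{1,1}}{2r_{1,2}}\big)\cap f(\Delta_1)\Big)$; (b) if $\varepsilon_1r_{1,2}q_1q_3<0$, then $\Omega=\mathcal{J}_1\Big(\big(-\tfrac{r_{1,1}}{2r_{1,2}},\infty\big)\cap f(\Delta_1)\Big)$.
   Context: Quadratic game: $J_i(x)=\frac12x^\top Q_ix+b_i^\top x+p_i$, $Q_i\in\mathbb{R}^{N\times N}$ symmetric, $b_i\in\mathbb{R}^N$, $p_i\in\mathbb{R}$. $(Q)_{j:}$ = $j$-th row, $(Q)_{:j}$ = $j$-th column, $(b)_j$ = $j$-th entry; $[Q]^{d,1}$ is $Q$ with row $d$ and column $1$ removed, $[Q]^{d,\sim}$ is $Q$ with only row $d$ removed. $\mathcal{Q}$ is the matrix with $m$-th row $(Q_m)_{m:}$, $\mathcal{B}$ the vector with $m$-th entry $(b_m)_m$. Player 1 is the only deceiver and deceives only player $d\neq1$. $\bar{\mathcal{Q}}$ is the $N\times N$ matrix whose only nonzero row is row $d$, equal to $(Q_d)_{1:}$; $\bar{\mathcal{B}}$ the vector whose only nonzero entry is entry $d$, equal to $(b_d)_1$. For $\delta\in\mathbb{R}$, $\mathcal{Q}_\delta=\mathcal{Q}+\delta\bar{\mathcal{Q}}$, $\mathcal{B}_\delta=\mathcal{B}+\delta\bar{\mathcal{B}}$.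 Fix $k>0$; assume $-k\mathcal{Q}$ is Hurwitz and $[\mathcal{Q}]^{d,1}$ is invertible. $x^*=-\mathcal{Q}^{-1}\mathcal{B}$; $\Delta_1=\{\delta\in\mathbb{R}:-k\mathcal{Q}_\delta\text{ Hurwitz}\}$; for $\delta\in\Delta_1$, $x_\delta=-\mathcal{Q}_\delta^{-1}\mathcal{B}_\delta$ (the deceptive Nash equilibrium). $\Phi=\begin{bmatrix}1\\-([\mathcal{Q}]^{d,1})^{-1}([\mathcal{Q}]^{d,\sim})_{:1}\end{bmatrix}\in\mathbb{R}^N$; $q_1=-\big((b_d)_1+(Q_d)_{1:}x^*\big)$, $q_2=(Q_d)_{1:}\Phi$, $q_3=(Q_d)_{d:}\Phi$; $r_{i,2}=\frac12\Phi^\top Q_i\Phi$, $r_{i,1}=(Q_ix^*+b_i)^\top\Phi$; $f(\delta)=\frac{q_1\delta}{q_2\delta+q_3}$ for $\delta\in\Delta_1$; $\mathcal{J}_i(e)=r_{i,2}e^2+r_{i,1}e+J_i(x^* )$. Given a nonzero constant $\varepsilon_1$, a value $J^{\mathrm{ref}}\in\mathbb{R}$ is attainable if there exists $\delta^*\in\Delta_1$ with $J_1(x_{\delta^*})=J^{\mathrm{ref}}$ and $\varepsilon_1\frac{d}{d\delta}J_1(x_\delta)\big|_{\delta=\delta^*}<0$. *)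

(* Defs.v *)
From HB Require Import structures.
From mathcomp Require Import all_boot all_order all_algebra.
From mathcomp Require Import all_classical all_reals all_analysis.
From mathcomp.real_closed Require complex.
Import complex.ComplexField.
Set Implicit Arguments. Unset Strict Implicit. Unset Printing Implicit Defensive.
Import Order.TTheory GRing.Theory Num.Theory.
Local Open Scope ring_scope.
Local Open Scope classical_set_scope.

Section QuadGame.
Variable R : realType.

Definition hurwitz (m : nat) (A : 'M[R]_m) : Prop :=
  forall z : complex.complex R,
    root (map_poly (fun x : R => complex.Complex x 0) (char_poly A)) z ->
    complex.Re z < 0.

(* Players are indexed by 'I_n.+1 (N = n.+1); player "1" is ord0. *)
Variable n : nat.
Local Notation N := n.+1.
Variables (Q : 'I_N -> 'M[R]_N) (b : 'I_N -> 'cV[R]_N) (p : 'I_N -> R).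

Definition Jcost (i : 'I_N) (x : 'cV[R]_N) : R :=
  (x^T *m Q i *m x) 0 0 / 2 + ((b i)^T *m x) 0 0 + p i.

Definition calQ : 'M[R]_N := \matrix_(m, j) Q m m j.
Definition calB : 'cV[R]_N := \col_m b m m 0.

Variable d : 'I_N.  (* the deceived player *)

Definition calQbar : 'M[R]_N := \matrix_(i, j) (if i == d then Q d ord0 j else 0).
Definition calBbar : 'cV[R]_N := \col_i (if i == d then b d ord0 0 else 0).

Definition calQd (delta : R) : 'M[R]_N := calQ + delta *: calQbar.
Definition calBd (delta : R) : 'cV[R]_N := calB + delta *: calBbar.

Definition xstar : 'cV[R]_N := - (invmx calQ *m calB).

Variable k : R.
Definition Delta1 : set R := [set delta | hurwitz (- k *: calQd delta)].

Definition xdelta (delta : R) : 'cV[R]_N := - (invmx (calQd delta) *m calBd delta).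

Definition Qd1 : 'M[R]_n := row' d (col' ord0 calQ).
Definition Qdcol1 : 'cV[R]_n := col ord0 (row' d calQ).

Definition Phi : 'cV[R]_N := col_mx (1 : 'M[R]_1) (- (invmx Qd1 *m Qdcol1)).

Definition q1 : R := - (b d ord0 0 + (row ord0 (Q d) *m xstar) 0 0).
Definition q2 : R := (row ord0 (Q d) *m Phi) 0 0.
Definition q3 : R := (row d (Q d) *m Phi) 0 0.

Definition r2 (i : 'I_N) : R := (Phi^T *m Q i *m Phi) 0 0 / 2.
Definition r1 (i : 'I_N) : R := ((Q i *m xstar + b i)^T *m Phi) 0 0.

Definition fdelta (delta : R) : R := q1 * delta / (q2 * delta + q3).

Definition calJ (i : 'I_N) (e : R) : R := r2 i * e ^+ 2 + r1 i * e + Jcost i xstar.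

Variable eps1 : R.
Definition attainable (Jref : R) : Prop :=
  exists2 dstar, Delta1 dstar &
    Jcost ord0 (xdelta dstar) = Jref /\
    eps1 * derive1 (fun delta => Jcost ord0 (xdelta delta)) dstar < 0.

Definition Omega : set R := [set Jref | attainable Jref].

End QuadGame.

(* Main.v *)
Require Import Defs.
From HB Require Import structures.
From mathcomp Require Import all_boot all_order all_algebra.
From mathcomp Require Import all_classical all_reals all_analysis.
From mathcomp Require Import ring lra.
From mathcomp.real_closed Require complex.
Import complex.ComplexField.
Import Order.TTheory GRing.Theory Num.Theory.
Local Open Scope ring_scope.
Local Open Scope classical_set_scope.

Lemma is_derive_ext {R : realType} {f g : R -> R} {x v d d'} :
  is_derive x v f d -> f =1 g -> d = d' -> is_derive x v g d'.
Proof. by move=> H /funext <- <-. Qed.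

Lemma fder (R : realType) (q1 q2 q3 x : R) : q2*x+q3 != 0 ->
  is_derive x 1 (fun t => q1*t/(q2*t+q3)) (q1*q3/(q2*x+q3)^+2).
Proof.
move=> h.
have hl : is_derive x 1 (fun t : R => q1 * t) q1.
  apply: (is_derive_ext (is_deriveZ q1 (is_derive_id x 1))) => [t//|].
  by rewrite /GRing.scale /= mulr1.
have hd : is_derive x 1 (fun t : R => q2 * t + q3) q2.
  apply: (is_derive_ext (is_deriveD (is_deriveZ q2 (is_derive_id x 1)) (is_derive_cst q3 x 1))) => [t//|].
  by rewrite /GRing.scale /= mulr1 addr0.
have hv := @is_deriveV _ (fun t => q2*t+q3) x q2 1 h hd.
have hm := is_deriveM hl hv.
apply: (is_derive_ext hm) => [t//|].
rewrite /GRing.scale /=. field. exact: h.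
Qed.

Lemma hder (R : realType) (q1 q2 q3 r2 r1 C x : R) : q2*x+q3 != 0 ->
  is_derive x 1 (fun t => r2 * (q1*t/(q2*t+q3))^+2 + r1 * (q1*t/(q2*t+q3)) + C)
    ((2*r2*(q1*x/(q2*x+q3)) + r1) * (q1*q3/(q2*x+q3)^+2)).
Proof.
move=> h; have hf := @fder _ q1 _ _ _ h.
have h1 := is_deriveZ r2 (is_deriveX 2 hf).
have h2 := is_deriveZ r1 hf.
have h3 := is_deriveD (is_deriveD h1 h2) (is_derive_cst C x 1).
apply: (is_derive_ext h3) => [t//|].
rewrite /GRing.scale /= addr0 expr1; field. exact: h.
Qed.

Lemma hurwitz_unit {R : realType} {m : nat} (M : 'M[R]_m) (k : R) :
  0 < k -> hurwitz (- k *: M) -> M \in unitmx.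
Proof.
move=> k0 H; apply: contraT => hM.
have : complex.Re (0 : complex.complex R) < 0.
  apply: H; rewrite rootE horner_coef0 coef_map_id0 //.
  rewrite char_poly_det detZ.
  move: hM; rewrite unitmxE unitfE negbK => /eqP ->.
  by rewrite !mulr0.
by rewrite ltxx.
Qed.

Lemma ker_unit {R : realType} {m : nat} (A : 'M[R]_m) :
  (forall v : 'cV[R]_m, A *m v = 0 -> v = 0) -> A \in unitmx.
Proof.
move=> H; rewrite -unitmx_tr -row_free_unit -kermx_eq0; apply/eqP.
set K := kermx A^T.
have : (K *m A^T)^T = 0 by rewrite mulmx_ker trmx0.
rewrite trmx_mul trmxK => HK.
have HT : K^T = 0.
  apply/matrixP => i j.
  have := H (col j K^T); rewrite colE mulmxA HK mul0mx => /(_ erefl).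
  rewrite -colE => /matrixP /(_ i 0).
  by rewrite !mxE.
by rewrite -(trmxK K) HT trmx0.
Qed.

Section S.
Variables (R : realType) (n : nat) (Q : 'I_n.+1 -> 'M[R]_n.+1) (b : 'I_n.+1 -> 'cV[R]_n.+1) (d : 'I_n.+1).
Hypothesis hD : Qd1 Q d \in unitmx.

Lemma rowQ_split : (row' d (calQ Q) : 'M[R]_(n, (1 + n)%N)) = row_mx (Qdcol1 Q d) (Qd1 Q d).
Proof.
apply/matrixP => i j; rewrite -(splitK j); case: (fintype.split j) => j'.
  rewrite row_mxEl !mxE; congr (Q _ _ _); apply: val_inj => /=.
  by case: j' => [[]].
rewrite row_mxEr !mxE; congr (Q _ _ _); exact: val_inj.
Qed.

Lemma rowQ_Phi : row' d (calQ Q) *m Phi Q d = 0.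
Proof.
have E := mul_row_col (Qdcol1 Q d) (Qd1 Q d) (1 : 'M[R]_1) (- (invmx (Qd1 Q d) *m Qdcol1 Q d)).
rewrite -rowQ_split in E.
apply: (etrans E).
by rewrite mulmx1 mulmxN mulmxA mulmxV // mul1mx subrr.
Qed.

Lemma Phi0 : Phi Q d ord0 0 = 1.
Proof.
rewrite /Phi (_ : ord0 = lshift n (ord0 : 'I_1)); last exact: val_inj.
apply: etrans; first exact: col_mxEu.
by rewrite mxE.
Qed.

Lemma calQ_entry (v : 'cV[R]_n.+1) i : (calQ Q *m v) i 0 = (row i (Q i) *m v) 0 0.
Proof. by rewrite !mxE; apply: eq_bigr => j _; rewrite !mxE. Qed.

Lemma calQbar_entry (v : 'cV[R]_n.+1) i :
  (calQbar Q d *m v) i 0 = if i == d then (row ord0 (Q d) *m v) 0 0 else 0.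
Proof.
rewrite !mxE; case: (boolP (i == d)) => [/eqP ->|/negbTE hi].
  by apply: eq_bigr => j _; rewrite !mxE eqxx.
by rewrite big1 // => j _; rewrite !mxE hi mul0r.
Qed.

Lemma calQPhi i : (calQ Q *m Phi Q d) i 0 = if i == d then q3 Q d else 0.
Proof.
case: eqP => [->|/eqP hi]; first by rewrite calQ_entry.
case: (unliftP d i) => [i' ->|E]; last by rewrite E eqxx in hi.
have E : (row' d (calQ Q) *m Phi Q d) i' 0 = 0 by rewrite rowQ_Phi mxE.
rewrite -E.
by rewrite !mxE; apply: eq_bigr => j _; rewrite !mxE.
Qed.

Hypothesis hQ : calQ Q \in unitmx.

Lemma QxB : calQ Q *m xstar Q b = - calB b.
Proof. by rewrite /xstar mulmxN mulmxA mulmxV // mul1mx. Qed.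

Lemma resid (de e : R) i :
  (calQd Q d de *m (xstar Q b + e *: Phi Q d) + calBd b d de) i 0
  = if i == d then e * (q3 Q d + de * q2 Q d) - de * q1 Q b d else 0.
Proof.
rewrite /calQd /calBd mulmxDl !mulmxDr -!scalemxAl -!scalemxAr QxB.
have h1 := calQPhi i; have h2 := calQbar_entry (xstar Q b) i.
have h3 := calQbar_entry (Phi Q d) i.
move: h1 h2 h3.
move: (calQ Q *m Phi Q d) (calQbar Q d *m xstar Q b) (calQbar Q d *m Phi Q d) => A B C h1 h2 h3.
rewrite !mxE h1 h2 h3 /q1 /q2.
case: (boolP (i == d)) => [/eqP ->|/negbTE hi]; rewrite ?eqxx ?hi; ring.
Qed.

Lemma QdPhi (de : R) i :
  (calQd Q d de *m Phi Q d) i 0 = if i == d then q3 Q d + de * q2 Q d else 0.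
Proof.
rewrite /calQd mulmxDl -!scalemxAl.
have h1 := calQPhi i; have h3 := calQbar_entry (Phi Q d) i.
move: h1 h3.
move: (calQ Q *m Phi Q d) (calQbar Q d *m Phi Q d) => A C h1 h3.
rewrite !mxE h1 h3 /q2.
case: (i == d); ring.
Qed.

Lemma Qd_entry_ne (de : R) (w : 'cV[R]_n.+1) i : i != d ->
  (calQd Q d de *m w) i 0 = (calQ Q *m w) i 0.
Proof.
move=> /negbTE hi; rewrite /calQd mulmxDl -!scalemxAl.
have h3 := calQbar_entry w i; move: h3.
move: (calQbar Q d *m w) => C h3.
by rewrite [LHS]mxE [X in _ + X]mxE h3 hi mulr0 addr0.
Qed.

Lemma unit_q (de : R) : calQd Q d de \in unitmx -> q3 Q d + de * q2 Q d != 0.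
Proof.
move=> hu; apply/negP => /eqP h0.
have H : calQd Q d de *m Phi Q d = 0.
  apply/matrixP => i j; rewrite (ord1 j) QdPhi h0 mxE; by case: ifP.
have := Phi0; rewrite -(mulKmx hu (Phi Q d)) H mulmx0 mxE => /eqP.
by rewrite eq_sym oner_eq0.
Qed.

Lemma q_unit (de : R) : q3 Q d + de * q2 Q d != 0 -> calQd Q d de \in unitmx.
Proof.
move=> hq; apply: ker_unit => w Hw.
set e := w ord0 0.
set u := w - e *: Phi Q d.
have Hu : calQd Q d de *m u = - e *: (calQd Q d de *m Phi Q d).
  by rewrite mulmxBr Hw -scalemxAr sub0r scaleNr.
have E3 : row' d (calQ Q) *m u = 0.
  apply/matrixP => i j; rewrite (ord1 j).
  have -> : (row' d (calQ Q) *m u) i 0 = (calQ Q *m u) (lift d i) 0.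
    by rewrite !mxE; apply: eq_bigr => k _; rewrite !mxE.
  have hne : lift d i != d by rewrite eq_sym neq_lift.
  rewrite -(Qd_entry_ne de) // Hu [LHS]mxE QdPhi (negbTE hne) mulr0.
  by rewrite mxE.
have u0 : u ord0 0 = 0.
  rewrite /u; have := Phi0; move: (Phi Q d) => P P0.
  by rewrite !mxE P0 mulr1 subrr.
have Hwu : w = u + e *: Phi Q d by rewrite /u subrK.
clearbody u e.
have E1 : (u : 'M[R]_(1+n,1)) = col_mx (usubmx (u : 'M[R]_(1+n,1))) (dsubmx (u : 'M[R]_(1+n,1))).
  by rewrite vsubmxK.
have E2 : usubmx (u : 'M[R]_(1+n,1)) = 0.
  apply/matrixP => i j; rewrite (ord1 i) (ord1 j) !mxE.
  have -> : lshift n (ord0 : 'I_1) = ord0 :> 'I_n.+1 by apply: val_inj.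
  exact: u0.
have E5 := mul_row_col (Qdcol1 Q d) (Qd1 Q d) (usubmx (u : 'M[R]_(1+n,1))) (dsubmx (u : 'M[R]_(1+n,1))).
rewrite -rowQ_split E2 mulmx0 add0r in E5.
rewrite E1 E2 in E3.
have E4 : Qd1 Q d *m dsubmx (u : 'M[R]_(1+n,1)) = 0 by rewrite -E5; exact: E3.
have E6 : dsubmx (u : 'M[R]_(1+n,1)) = 0 by rewrite -(mulKmx hD (dsubmx _)) E4 mulmx0.
have Eu : u = 0.
  apply: etrans E1 _; rewrite E2 E6; exact: col_mx0.
have := congr1 (fun M : 'cV[R]_n.+1 => M d 0) Hw.
rewrite /= Hwu Eu add0r -scalemxAr [LHS]mxE QdPhi eqxx mxE => /eqP.
rewrite mulf_eq0 (negbTE hq) orbF => /eqP e0.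
by rewrite e0 scale0r.
Qed.

Lemma xdelta_eq (de : R) : q3 Q d + de * q2 Q d != 0 ->
  xdelta Q b d de = xstar Q b + fdelta Q b d de *: Phi Q d.
Proof.
move=> hq; have hu := q_unit de hq.
set v := xstar Q b + fdelta Q b d de *: Phi Q d.
have hr : calQd Q d de *m v + calBd b d de = 0.
  apply/matrixP => i j; rewrite (ord1 j) resid [RHS]mxE.
  case: (i == d) => //; rewrite /fdelta; field.
  by rewrite addrC mulrC.
have hv : calQd Q d de *m v = - calBd b d de by apply/eqP; rewrite -addr_eq0 hr.
by rewrite /xdelta -mulmxN -hv mulKmx.
Qed.

End S.

Lemma addE {R : realType} {m n} (A B : 'M[R]_(m, n)) i j : (A + B) i j = A i j + B i j.
Proof. by rewrite mxE. Qed.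
Lemma scaleE {R : realType} {m n} (a : R) (A : 'M[R]_(m, n)) i j : (a *: A) i j = a * A i j.
Proof. by rewrite mxE. Qed.

Lemma trD {R : realType} {m} (x y : 'cV[R]_m) : (x + y)^T = x^T + y^T.
Proof. by apply/matrixP => i j; rewrite !mxE. Qed.
Lemma trZ {R : realType} {m} (a : R) (x : 'cV[R]_m) : (a *: x)^T = a *: x^T.
Proof. by apply/matrixP => i j; rewrite !mxE. Qed.

Lemma Jline {R : realType} {n} (Q : 'I_n.+1 -> 'M[R]_n.+1) (b : 'I_n.+1 -> 'cV[R]_n.+1)
  (p : 'I_n.+1 -> R) (d : 'I_n.+1) (e : R) :
  (Q ord0)^T = Q ord0 ->
  Jcost Q b p ord0 (xstar Q b + e *: Phi Q d) = calJ Q b p d ord0 e.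
Proof.
move=> hM; rewrite /calJ /Jcost /r2 /r1.
move: (xstar Q b) (Phi Q d) (Q ord0) (b ord0) hM => a P M c hM.
have sym : (P^T *m M *m a) 0 0 = (a^T *m M *m P) 0 0.
  have -> : (P^T *m M *m a) 0 0 = (P^T *m M *m a)^T 0 0 by rewrite [RHS]mxE.
  by rewrite !trmx_mul trmxK hM mulmxA.
rewrite trD trZ !mulmxDl !mulmxDr -!scalemxAl -!scalemxAr.
rewrite trD mulmxDl !trmx_mul hM.
rewrite !addE !scaleE sym.
by field.
Qed.



Lemma lin_der {R : realType} (q2 q3 x : R) :
  is_derive x 1 (fun t : R => q2 * t + q3) q2.
Proof.
apply: (is_derive_ext (is_deriveD (is_deriveZ q2 (is_derive_id x 1)) (is_derive_cst q3 x 1))) => [t//|].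
by rewrite /GRing.scale /= mulr1 addr0.
Qed.

Lemma sign_id {R : realType} (eps r2 r1 q1 q3 s e : R) : r2 != 0 -> s != 0 ->
  eps * ((2 * r2 * e + r1) * (q1 * q3 / s ^+ 2)) =
  2 * (eps * r2 * q1 * q3) * (e - (- r1 / (2 * r2))) / s ^+ 2.
Proof. move=> h1 h2; field; apply/andP; split => //; by rewrite mulf_neq0. Qed.

Lemma sign_lt {R : realType} (x s : R) : s != 0 -> (x / s ^+ 2 < 0) = (x < 0).
Proof.
move=> hs; have hs2 : 0 < s ^+ 2 by rewrite exprn_even_gt0 //.
by rewrite ltr_pdivrMr // mul0r.
Qed.

Theorem theorem2 (R : realType) (n : nat)
  (Q : 'I_n.+1 -> 'M[R]_n.+1) (b : 'I_n.+1 -> 'cV[R]_n.+1) (p : 'I_n.+1 -> R)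
  (d : 'I_n.+1) (k eps1 : R) :
  (forall i, (Q i)^T = Q i) ->
  d != ord0 ->
  0 < k ->
  hurwitz (- k *: calQ Q) ->
  Qd1 Q d \in unitmx ->
  eps1 != 0 ->
  r2 Q d ord0 != 0 ->
  let Om := Omega Q b p d k eps1 in
  let J1 := calJ Q b p d ord0 in
  let c := - (r1 Q b d ord0) / (2 * r2 Q d ord0) in
  (0 < eps1 * r2 Q d ord0 * q1 Q b d * q3 Q d ->
     Om = J1 @` ([set e | e < c] `&` fdelta Q b d @` Delta1 Q d k)) /\
  (eps1 * r2 Q d ord0 * q1 Q b d * q3 Q d < 0 ->
     Om = J1 @` ([set e | c < e] `&` fdelta Q b d @` Delta1 Q d k)).
Proof.
move=> hs _ k0 hH hD he hr Om J1 c.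
have hQ : calQ Q \in unitmx := @hurwitz_unit _ _ _ _ k0 hH.
have hJ : forall de, q3 Q d + de * q2 Q d != 0 ->
    Jcost Q b p ord0 (xdelta Q b d de) = calJ Q b p d ord0 (fdelta Q b d de).
  move=> de hq; rewrite (xdelta_eq _ _ _ _ _ hD hQ _ hq); exact: Jline.
have key : forall de, Delta1 Q d k de ->
  q2 Q d * de + q3 Q d != 0 /\
  Jcost Q b p ord0 (xdelta Q b d de) = calJ Q b p d ord0 (fdelta Q b d de) /\
  derive1 (fun t => Jcost Q b p ord0 (xdelta Q b d t)) de =
   (2 * r2 Q d ord0 * fdelta Q b d de + r1 Q b d ord0) *
     (q1 Q b d * q3 Q d / (q2 Q d * de + q3 Q d) ^+ 2).
  move=> de hde.
  have hu : calQd Q d de \in unitmx := @hurwitz_unit _ _ _ _ k0 hde.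
  have hq := unit_q _ _ _ _ hD _ hu.
  have hq' : q2 Q d * de + q3 Q d != 0 by rewrite addrC mulrC.
  split => //; split; first exact: hJ.
  have hd := @hder R (q1 Q b d) (q2 Q d) (q3 Q d) (r2 Q d ord0) (r1 Q b d ord0)
    (Jcost Q b p ord0 (xstar Q b)) de hq'.
  have hd2 : is_derive de 1 (fun t => Jcost Q b p ord0 (xdelta Q b d t))
    ((2 * r2 Q d ord0 * (q1 Q b d * de / (q2 Q d * de + q3 Q d)) + r1 Q b d ord0) *
     (q1 Q b d * q3 Q d / (q2 Q d * de + q3 Q d) ^+ 2)).
    apply: (near_eq_is_derive _ hd).
    have hc := differentiable_continuous
      ((derivable1_diffP _ _).1 (@ex_derive _ _ _ _ _ _ _ (lin_der (q2 Q d) (q3 Q d) de))).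
    have := cvgr_neq0 _ hc hq'.
    move=> hN; near=> t.
    have ht : q2 Q d * t + q3 Q d != 0.
      near: t. exact: hN.
    have ht' : q3 Q d + t * q2 Q d != 0 by rewrite addrC mulrC.
    by rewrite hJ // /calJ /fdelta.
  rewrite derive1E; case: hd2 => _ ->; by rewrite /fdelta.
rewrite /Om /J1 /c; clear Om J1 c.
have hc0 : forall de, Delta1 Q d k de ->
  eps1 * derive1 (fun t => Jcost Q b p ord0 (xdelta Q b d t)) de =
  2 * (eps1 * r2 Q d ord0 * q1 Q b d * q3 Q d) *
    (fdelta Q b d de - (- r1 Q b d ord0 / (2 * r2 Q d ord0))) / (q2 Q d * de + q3 Q d) ^+ 2.
  move=> de hde; have [hq [_ ->]] := key de hde.
  exact: sign_id.
split => hK; apply/seteqP; split.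
- move=> J [de hde [hJde hder]].
  have [hq [hJe _]] := key de hde.
  exists (fdelta Q b d de); last by rewrite -hJde hJe.
  split; last by exists de.
  move: hder; rewrite hc0 // sign_lt //= => H.
  rewrite -subr_lt0; nra.
- move=> J [e [/= hec [de hde hfe]] <-].
  have [hq [hJe _]] := key de hde.
  exists de => //; split; first by rewrite hJe hfe.
  rewrite hc0 // sign_lt // hfe; rewrite -subr_lt0 in hec; nra.
- move=> J [de hde [hJde hder]].
  have [hq [hJe _]] := key de hde.
  exists (fdelta Q b d de); last by rewrite -hJde hJe.
  split; last by exists de.
  move: hder; rewrite hc0 // sign_lt //= => H.
  rewrite -subr_gt0; nra.
- move=> J [e [/= hec [de hde hfe]] <-].
  have [hq [hJe _]] := key de hde.
  exists de => //; split; first by rewrite hJe hfe.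
  rewrite hc0 // sign_lt // hfe; rewrite -subr_gt0 in hec; nra.
Unshelve. all: by end_near.
Qed.
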